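(* Let $A$ be an integral domain with quotient field $\mathrm{qf}(A)$. Then the trivial ring extension $A\propto \mathrm{qf}(A)$ is an elementary divisor ring if and only if $A$ is an elementary divisor ring.
   Context: All rings are commutative with identity. For a ring $A$ and an $A$-module $E$, $A\propto E$ is the set of pairs $(a,e)$ with componentwise addition and multiplication $(a,e)(b,f)=(ab,af+be)$. A matrix $M$ (not necessarily square) admits diagonal reduction if there are invertible $P,Q$ with $PMQ$ diagonal $(d_{ij})$ and $d_{ii}\mid d_{(i+1)(i+1)}$ for each $i$; a ring is an elementary divisor ring if every matrix over it admits diagonal reduction. *)

(* Defs.v *)
From HB Require Import structures.
From mathcomp Require Import all_boot all_order all_algebra.
From mathcomp Require Import fraction.
Set Implicit Arguments. Unset Strict Implicit. Unset Printing Implicit Defensive.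
Import Order.TTheory GRing.Theory.
Local Open Scope ring_scope.

Definition dvdr (R : comPzRingType) (a b : R) : Prop := exists c : R, b = c * a.

Definition invertible_mx (R : pzRingType) (n : nat) (P : 'M[R]_n) : Prop :=
  exists Q : 'M[R]_n, P *m Q = 1%:M /\ Q *m P = 1%:M.

Definition diagonal_divisibility (R : comPzRingType) (m n : nat) (D : 'M[R]_(m, n)) : Prop :=
  (forall (i : 'I_m) (j : 'I_n), (i : nat) <> (j : nat) -> D i j = 0) /\
  (forall (i i' : 'I_m) (j j' : 'I_n),
      (i : nat) = j -> (i' : nat) = j' -> (i' : nat) = i.+1 ->
      dvdr (D i j) (D i' j')).

Definition admits_diagonal_reduction (R : comPzRingType) (m n : nat) (M : 'M[R]_(m, n)) : Prop :=
  exists (P : 'M[R]_m) (Q : 'M[R]_n),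
    invertible_mx P /\ invertible_mx Q /\ diagonal_divisibility (P *m M *m Q).

Definition elementary_divisor_ring (R : comPzRingType) : Prop :=
  forall (m n : nat) (M : 'M[R]_(m, n)), admits_diagonal_reduction M.

Definition idealization (R : comNzRingType) (E : lmodType R) : Type := (R * E)%type.

Section Idealization.
Variables (R : comNzRingType) (E : lmodType R).
Local Notation T := (idealization E).

HB.instance Definition _ := GRing.Zmodule.copy T (R * E)%type.

Definition ideal_one : T := (1, 0).
Definition ideal_mul (x y : T) : T := (x.1 * y.1, x.1 *: y.2 + y.1 *: x.2).

Lemma ideal_mulA : associative ideal_mul.
Proof.
move=> [a e] [b f] [c g]; rewrite /ideal_mul /=; congr pair; first by rewrite mulrA.
by rewrite !scalerDr !scalerA [c * a]mulrC [c * b]mulrC !addrA.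
Qed.

Lemma ideal_mulC : commutative ideal_mul.
Proof. by move=> [a e] [b f]; rewrite /ideal_mul /= mulrC addrC. Qed.

Lemma ideal_mul1 : left_id ideal_one ideal_mul.
Proof. by move=> [a e]; rewrite /ideal_mul /= mul1r scale1r scaler0 addr0. Qed.

Lemma ideal_mulDl : left_distributive ideal_mul +%R.
Proof.
move=> [a e] [b f] [c g]; rewrite /ideal_mul /=; congr pair; first by rewrite mulrDl.
by rewrite scalerDl scalerDr addrACA.
Qed.

Lemma ideal_one_neq0 : ideal_one != 0.
Proof. apply/negP => /eqP H; have := congr1 fst H; move=> /= /eqP; by rewrite oner_eq0. Qed.

HB.instance Definition _ := GRing.Zmodule_isComNzRing.Build T
  ideal_mulA ideal_mulC ideal_mul1 ideal_mulDl ideal_one_neq0.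
End Idealization.

Definition qf_mod (A : idomainType) : Type := {fraction A}.

Section QfMod.
Variable A : idomainType.
HB.instance Definition _ := GRing.Zmodule.copy (qf_mod A) {fraction A}.

Definition qf_scale (a : A) (x : qf_mod A) : qf_mod A := (@FracField.tofrac A a * (x : {fraction A})).

Lemma qf_scaleA a b v : qf_scale a (qf_scale b v) = qf_scale (a * b) v.
Proof. by rewrite /qf_scale rmorphM mulrA. Qed.
Lemma qf_scale1 : left_id 1 qf_scale.
Proof. by move=> v; rewrite /qf_scale rmorph1 mul1r. Qed.
Lemma qf_scaleDr : right_distributive qf_scale +%R.
Proof. by move=> a u v; rewrite /qf_scale mulrDr. Qed.
Lemma qf_scaleDl v : {morph qf_scale^~ v : a b / a + b}.
Proof. by move=> a b; rewrite /qf_scale rmorphD mulrDl. Qed.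

HB.instance Definition _ := GRing.Zmodule_isLmodule.Build A (qf_mod A)
  qf_scaleA qf_scale1 qf_scaleDr qf_scaleDl.
End QfMod.

(* Main.v *)
From HB Require Import structures.
Require Import Defs.
From mathcomp Require Import all_boot all_algebra fraction generic_quotient.
From Stdlib Require Import ClassicalEpsilon Lia.
From mathcomp Require Import zify.
Set Implicit Arguments. Unset Strict Implicit. Unset Printing Implicit Defensive.
Import GRing.Theory.
Local Open Scope ring_scope.
Local Open Scope quotient_scope.

Lemma choice_mx (T : Type) m n (P : 'I_m -> 'I_n -> T -> Prop) :
  (forall i j, exists c, P i j c) -> exists C : 'M[T]_(m,n), forall i j, P i j (C i j).
Proof.
move=> H; exists (\matrix_(i,j) proj1_sig (constructive_indefinite_description _ (H i j))).
by move=> i j; rewrite mxE; exact: proj2_sig.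
Qed.

Section Generic.
Variable R : comPzRingType.

Definition mdvd m n (a : R) (X : 'M[R]_(m,n)) := exists C, X = a *: C.

Lemma dvd_mdvd m n a (X : 'M[R]_(m,n)) : (forall i j, dvdr a (X i j)) -> mdvd a X.
Proof.
move=> H; have [C HC] := choice_mx H; exists C.
by apply/matrixP => i j; rewrite mxE HC mulrC.
Qed.

Lemma mdvd_dvd m n a (X : 'M[R]_(m,n)) : mdvd a X -> forall i j, dvdr a (X i j).
Proof. by move=> [C ->] i j; exists (C i j); rewrite mxE mulrC. Qed.

Lemma mdvd_mul m n p q a (P : 'M[R]_(m,n)) X (Q : 'M[R]_(p,q)) :
  mdvd a X -> mdvd a (P *m X *m Q).
Proof. by move=> [C ->]; exists (P *m C *m Q); rewrite scalemxAl scalemxAr. Qed.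

Lemma inv_mx1 n : invertible_mx (1%:M : 'M[R]_n).
Proof. by exists 1%:M; rewrite mul1mx. Qed.

Lemma inv_mxM n (P Q : 'M[R]_n) : invertible_mx P -> invertible_mx Q -> invertible_mx (P *m Q).
Proof.
move=> [P' [h1 h2]] [Q' [h3 h4]]; exists (Q' *m P'); split.
  by rewrite mulmxA -(mulmxA P) h3 mulmx1 h1.
by rewrite mulmxA -(mulmxA Q') h2 mulmx1 h4.
Qed.

Lemma inv_block m (P : 'M[R]_m) : invertible_mx P ->
  invertible_mx (block_mx 1%:M 0 0 P : 'M_(1 + m)).
Proof.
move=> [P' [h1 h2]]; exists (block_mx 1%:M 0 0 P'); rewrite scalar_mx_block.
by rewrite !mulmx_block !mulmx0 !mul0mx !mulmx1 !addr0 !add0r h1 h2.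
Qed.

Lemma inv_lowtri m (v : 'M[R]_(m,1)) :
  invertible_mx (block_mx 1%:M 0 v 1%:M : 'M_(1 + m)).
Proof.
exists (block_mx 1%:M 0 (- v) 1%:M); rewrite scalar_mx_block.
rewrite !mulmx_block !mulmx0 !mul0mx !mulmx1 !mul1mx !addr0 !add0r.
by rewrite addrN addNr.
Qed.

Lemma inv_uptri n (u : 'M[R]_(1,n)) :
  invertible_mx (block_mx 1%:M u 0 1%:M : 'M_(1 + n)).
Proof.
exists (block_mx 1%:M (- u) 0 1%:M); rewrite scalar_mx_block.
by rewrite !mulmx_block !mulmx0 !mul0mx !mulmx1 !mul1mx !addr0 !add0r addrN addNr.
Qed.

Lemma diag_block (a : R) m n (D : 'M[R]_(m,n)) :
  diagonal_divisibility D -> (forall i j, dvdr a (D i j)) ->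
  diagonal_divisibility (block_mx a%:M 0 0 D : 'M_(1 + m, 1 + n)).
Proof.
move=> [Hd Hc] Ha; split.
  move=> i j; rewrite -[i]splitK -[j]splitK.
  case: (split i) => i'; case: (split j) => j' /= hij;
    rewrite ?block_mxEul ?block_mxEur ?block_mxEdl ?block_mxEdr ?mxE //.
    by rewrite !ord1 in hij.
  by apply: Hd => H; apply: hij; rewrite H.
move=> i i' j j'; rewrite -[i]splitK -[j]splitK -[i']splitK -[j']splitK.
case: (split i) => k; case: (split j) => l; case: (split i') => k'; case: (split j') => l' /=;
  rewrite ?block_mxEul ?block_mxEur ?block_mxEdl ?block_mxEdr ?mxE ?ord1 //=;
  try (move=> *; lia).
all: move=> h1 h2 h3.
all: first [ by exists 0; rewrite mul0r | by rewrite mulr1n; apply: Ha | by apply: Hc; lia | idtac ].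
Qed.


Definition step_prop := forall m n (M : 'M[R]_(m.+1,n.+1)), exists P Q,
  invertible_mx P /\ invertible_mx Q /\ mdvd ((P *m M *m Q) 0 0) (P *m M *m Q).

Lemma block_reduce m n (N : 'M[R]_(1 + m, 1 + n)) :
  mdvd (N 0 0) N ->
  (forall N2 : 'M[R]_(m, n), admits_diagonal_reduction N2) ->
  admits_diagonal_reduction N.
Proof.
move=> HC IH.
set a := N 0 0 in HC.
have [C eC] := HC.
pose u' : 'M_(1,n) := ursubmx C.
pose v' : 'M_(m,1) := dlsubmx C.
have eu : ursubmx N = a *: u'.
  by rewrite eC; apply/matrixP => i j; rewrite !mxE.
have ev : dlsubmx N = a *: v'.
  by rewrite eC; apply/matrixP => i j; rewrite !mxE.
have ea : ulsubmx N = a%:M.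
  rewrite [LHS]mx11_scalar !mxE /a.
  have e1 : lshift m (0 : 'I_1) = 0 by apply/val_inj.
  have e2 : lshift n (0 : 'I_1) = 0 by apply/val_inj.
  by rewrite e1 e2.
pose N2 := drsubmx N - v' *m ursubmx N.
pose L : 'M_(1 + m) := block_mx 1%:M 0 (- v') 1%:M.
pose Rm : 'M_(1 + n) := block_mx 1%:M (- u') 0 1%:M.
have eLNR : L *m N *m Rm = block_mx a%:M 0 0 N2.
  rewrite -[N in LHS]submxK ea eu ev /L /Rm /N2 !mulmx_block !mulmx0 !mul0mx !mulmx1 !mul1mx !addr0.
  rewrite !mulmxN !mulNmx mul_mx_scalar mul_scalar_mx !addNr mul0mx oppr0 add0r.
  by rewrite eu addrC.
have dN2 : mdvd a N2.
  exists (drsubmx C - v' *m u').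
  rewrite /N2 eu -scalemxAr scalerBr; congr (_ - _).
  by rewrite eC; apply/matrixP => i j; rewrite !mxE.
have [P2 [Q2 [HP2 [HQ2 HD2]]]] := IH N2.
exists (block_mx 1%:M 0 0 P2 *m L), (Rm *m block_mx 1%:M 0 0 Q2).
split; first by apply: inv_mxM; [apply: inv_block|apply: inv_lowtri].
split; first by apply: inv_mxM; [apply: inv_uptri|apply: inv_block].
have -> : block_mx 1%:M 0 0 P2 *m L *m N *m (Rm *m block_mx 1%:M 0 0 Q2)
   = block_mx 1%:M 0 0 P2 *m (L *m N *m Rm) *m block_mx 1%:M 0 0 Q2.
  by rewrite !mulmxA.
rewrite eLNR !mulmx_block !mulmx0 !mul0mx !mulmx1 !mul1mx !addr0 !add0r !mul0mx.
apply: diag_block => //.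
exact: mdvd_dvd (mdvd_mul _ _ dN2).
Qed.

Lemma edr_of_step : step_prop -> elementary_divisor_ring R.
Proof.
move=> H m; elim: m => [|m IH] n M.
  exists 1%:M, 1%:M; split; first exact: inv_mx1; split; first exact: inv_mx1.
  by split; case.
case: n M => [|n] M.
  exists 1%:M, 1%:M; split; first exact: inv_mx1; split; first exact: inv_mx1.
  by split=> [i []|i i' []].
have [P [Q [HP [HQ HC]]]] := H _ _ M.
have [P2 [Q2 [HP2 [HQ2 HD2]]]] := block_reduce HC (IH n).
exists (P2 *m P), (Q *m Q2).
split; first exact: inv_mxM.
split; first exact: inv_mxM.
by rewrite !mulmxA in HD2 *.
Qed.

End Generic.

Lemma frac_den (A : idomainType) (x : {fraction A}) :
  exists n d, d != 0 /\ x * FracField.tofrac d = FracField.tofrac n.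
Proof.
elim/quotW: x => r.
exists r.1, r.2; split; first exact: denom_ratioP.
change (FracField.mul (\pi r) (FracField.tofrac r.2) = FracField.tofrac r.1).
unlock FracField.tofrac. rewrite -FracField.pi_mul.
apply/eqmodP; rewrite /= FracField.equivfE /FracField.mulf /= !numden_Ratio ?oner_neq0 ?mulf_neq0 ?denom_ratioP //=.
  rewrite !mulr1 mulrC //.
all: exact: oner_neq0.
Qed.

Lemma chain_dvd (R : comPzRingType) m n (D : 'M[R]_(m.+1, n.+1)) :
  diagonal_divisibility D -> forall i j, dvdr (D 0 0) (D i j).
Proof.
move=> [Hd Hc] i j.
have dvd_trans (x y z : R) : dvdr x y -> dvdr y z -> dvdr x z.
  by move=> [c1 ->] [c2 ->]; exists (c2 * c1); rewrite mulrA.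
case: (eqVneq (i : nat) j) => [e|ne]; last first.
  by rewrite (Hd i j); [exists 0; rewrite mul0r | move=> e; rewrite e eqxx in ne].
suff H : forall k (i : 'I_m.+1) (j : 'I_n.+1), i = k :> nat -> j = k :> nat -> dvdr (D 0 0) (D i j).
  exact: (H i).
elim=> [|k IH] i' j' hi hj.
  have -> : i' = 0 by apply: val_inj.
  have -> : j' = 0 by apply: val_inj.
  by exists 1; rewrite mul1r.
have hk1 : (k < m.+1)%N by move: (ltn_ord i'); rewrite hi; lia.
have hk2 : (k < n.+1)%N by move: (ltn_ord j'); rewrite hj; lia.
apply: dvd_trans (IH (Ordinal hk1) (Ordinal hk2) erefl erefl) _.
by apply: Hc => //=; rewrite hi.
Qed.

Lemma edr_step (R : comPzRingType) : elementary_divisor_ring R ->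
  forall m n (X : 'M[R]_(m.+1, n.+1)), exists P Q,
  invertible_mx P /\ invertible_mx Q /\ mdvd ((P *m X *m Q) 0 0) (P *m X *m Q).
Proof.
move=> H m n X; have [P [Q [HP [HQ HD]]]] := H _ _ X.
exists P, Q; split => //; split => //.
exact: dvd_mdvd (chain_dvd HD).
Qed.

Section Spec.
Variable A : idomainType.
Local Notation R := (idealization (qf_mod A)).
Local Notation tofrac := (@FracField.tofrac A).
Definition ifst (x : R) : A := x.1.
Definition iota (a : A) : R := (a, 0).
Lemma ifst_zmod : zmod_morphism ifst. Proof. by move=> x y. Qed.
HB.instance Definition _ := GRing.isZmodMorphism.Build R A ifst ifst_zmod.
Lemma ifst_mon : monoid_morphism ifst. Proof. by split=> // x y. Qed.
HB.instance Definition _ := GRing.isMonoidMorphism.Build R A ifst ifst_mon.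
Lemma iota_zmod : zmod_morphism iota. Proof. by move=> x y; rewrite /iota; congr pair; rewrite subr0. Qed.
HB.instance Definition _ := GRing.isZmodMorphism.Build A R iota iota_zmod.
Lemma iota_mon : monoid_morphism iota.
Proof. split=> // x y; rewrite /iota; congr pair => /=. by rewrite !scaler0 addr0. Qed.
HB.instance Definition _ := GRing.isMonoidMorphism.Build A R iota iota_mon.
Lemma mulE (x y : R) : x * y = (x.1 * y.1, x.1 *: y.2 + y.1 *: x.2). Proof. by []. Qed.

Lemma ifst_iota_mx m n (X : 'M[A]_(m,n)) : map_mx ifst (map_mx iota X) = X.
Proof. by apply/matrixP => i j; rewrite !mxE. Qed.

Lemma inv_map (S T : comPzRingType) (f : {rmorphism S -> T}) n (P : 'M[S]_n) :
  invertible_mx P -> invertible_mx (map_mx f P).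
Proof.
move=> [P' [h1 h2]]; exists (map_mx f P'); split.
  by rewrite -map_mxM h1 map_mx1.
by rewrite -map_mxM h2 map_mx1.
Qed.

Lemma edr_down : elementary_divisor_ring R -> elementary_divisor_ring A.
Proof.
move=> H m n M0.
have [P [Q [HP [HQ [Hd Hc]]]]] := H _ _ (map_mx iota M0).
exists (map_mx ifst P), (map_mx ifst Q); split; first exact: inv_map.
split; first exact: inv_map.
have <- : map_mx ifst (P *m map_mx iota M0 *m Q) = map_mx ifst P *m M0 *m map_mx ifst Q.
  by rewrite !map_mxM ifst_iota_mx.
move: (P *m map_mx iota M0 *m Q) Hd Hc => X Hd Hc.
split.
  by move=> i j hij; rewrite mxE Hd // rmorph0.
move=> i i' j j' h1 h2 h3; have [c hc] := Hc i i' j j' h1 h2 h3.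
by exists (ifst c); rewrite !mxE hc rmorphM.
Qed.

Lemma dvdR (p q : R) : p.1 != 0 -> dvdr p.1 q.1 -> dvdr p q.
Proof.
case: p => d x; case: q => a y /= hd [c ea].
exists (c, (((y : {fraction A}) - tofrac c * (x : {fraction A})) / tofrac d : {fraction A}) : qf_mod A).
rewrite mulE /=; rewrite -ea; congr pair.
have hd' : tofrac d != 0 by rewrite tofrac_eq0.
change ((y : {fraction A}) = tofrac c * (x : {fraction A}) + tofrac d * (((y : {fraction A}) - tofrac c * (x : {fraction A})) / tofrac d)).
by rewrite [tofrac d * _]mulrC divfK // addrC subrK.
Qed.

Lemma common_den (s : seq {fraction A}) : exists c : A, c != 0 /\
  forall x, x \in s -> exists a, tofrac a = tofrac c * x.
Proof.
elim: s => [|x s [c [hc Hc]]]; first by exists 1; split => //; exact: oner_neq0.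
have [n [d [hd ex]]] := frac_den x.
exists (c * d); split; first by rewrite mulf_neq0.
move=> y; rewrite inE => /orP [/eqP ->|ys].
  by exists (c * n); rewrite !tofracM -ex -mulrA [tofrac d * _]mulrC.
have [a ea] := Hc y ys; exists (d * a).
by rewrite !tofracM ea mulrA [tofrac d * _]mulrC.
Qed.

Lemma mx_den m n (X : 'M[{fraction A}]_(m,n)) : exists c (L : 'M[A]_(m,n)), c != 0 /\
  forall i j, tofrac (L i j) = tofrac c * X i j.
Proof.
have [c [hc Hc]] := common_den [seq X p.1 p.2 | p <- enum {: 'I_m * 'I_n}].
have H : forall i j, exists a, tofrac a = tofrac c * X i j.
  move=> i j; apply: Hc; apply/mapP; exists (i, j) => //; by rewrite mem_enum.
have [L HL] := choice_mx H.
by exists c, L.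
Qed.

Lemma edr_up : elementary_divisor_ring A -> step_prop R.
Proof.
move=> H m n M.
pose M0 := map_mx ifst M.
have [P0 [Q0 [HP0 [HQ0 HD0]]]] := H _ _ M0.
have HDd := chain_dvd HD0.
set D := P0 *m M0 *m Q0 in HD0 HDd.
have eD : map_mx ifst (map_mx iota P0 *m M *m map_mx iota Q0) = D.
  by rewrite !map_mxM !ifst_iota_mx.
case: (eqVneq (D 0 0) 0) => [d0|dn0].
-
  have D0 : D = 0.
    apply/matrixP => i j; rewrite [RHS]mxE; have [c ->] := HDd i j; by rewrite d0 mulr0.
  have M00 : M0 = 0.
    have [P' [_ h1]] := HP0; have [Q' [h2 _]] := HQ0.
    by rewrite -[M0]mul1mx -h1 -[M0]mulmx1 -h2 !mulmxA -(mulmxA P') -(mulmxA P' _ Q0) -/D D0 mulmx0 mul0mx.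
  have [c [L [hc HL]]] := mx_den (\matrix_(i,j) ((M i j).2 : {fraction A})).
  have [P1 [Q1 [HP1 [HQ1 [F eF]]]]] := edr_step H L.
  set E := P1 *m L *m Q1 in eF.
  pose z : R := (0, ((tofrac c)^-1 : {fraction A}) : qf_mod A).
  have eM : M = z *: map_mx iota L.
    apply/matrixP => i j; rewrite !mxE.
    have h0 : (M i j).1 = 0 by have := congr1 (fun X : 'M[A]_(m.+1,n.+1) => X i j) M00; rewrite !mxE.
    have hL := HL i j; rewrite mxE in hL.
    have hc' : tofrac c != 0 by rewrite tofrac_eq0.
    case: (M i j) h0 hL => a y /= -> hL.
    rewrite mulE /=; congr pair; first by rewrite mul0r.
    change (y = (0 : A) *: (0 : qf_mod A) + (tofrac (L i j) * (tofrac c)^-1 : {fraction A})).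
    by rewrite scaler0 add0r hL mulrC mulKf.
  exists (map_mx iota P1), (map_mx iota Q1); split; first exact: inv_map.
  split; first exact: inv_map.
  have eN : map_mx iota P1 *m M *m map_mx iota Q1 = z *: map_mx iota E.
    by rewrite eM -scalemxAr -scalemxAl /E !map_mxM.
  rewrite eN; exists (map_mx iota F).
  rewrite {1}eF map_mxZ scalerA; congr (_ *: _).
  rewrite [RHS]mxE; by congr (_ * _); rewrite [RHS]mxE.
-
  exists (map_mx iota P0), (map_mx iota Q0); split; first exact: inv_map.
  split; first exact: inv_map.
  apply: dvd_mdvd => i j; apply: dvdR.
    have := congr1 (fun X : 'M[A]_(m.+1,n.+1) => X 0 0) eD; rewrite mxE /=. rewrite /ifst => ->; exact: dn0.
  have e1 := congr1 (fun X : 'M[A]_(m.+1,n.+1) => X 0 0) eD; have e2 := congr1 (fun X : 'M[A]_(m.+1,n.+1) => X i j) eD.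
  rewrite mxE /= in e1; rewrite mxE /= in e2.
  by rewrite /ifst in e1 e2; rewrite e1 e2; exact: HDd.
Qed.

End Spec.

Theorem corollary3p13 (A : idomainType) :
  elementary_divisor_ring (idealization (qf_mod A)) <-> elementary_divisor_ring A.
Proof.
split; first exact: edr_down.
by move=> H; apply: edr_of_step; apply: edr_up.
Qed.
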